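(* Let $\{a_n\}_{n\ge1}$, $\{b_n\}_{n\ge1}$ and $\{\tilde a_n\}_{n\ge1}$ be three non-negative real sequences such that $\sum_{n=1}^\infty a_n=\infty$, $\sum_{n=1}^\infty a_n b_n^p<\infty$, $\lim_{n\to\infty} a_n/\tilde a_n=1$, and $|b_{n+1}-b_n|\le C\,\tilde a_n\, b_n^{p-\epsilon}$ for all $n$, for some positive constants $C$, $p$ and some $\epsilon\in[0,p]$. Then $\lim_{n\to\infty} b_n=0$.
   Context: Here $b_n^{0}$ is interpreted as $1$ (relevant when $\epsilon=p$). *)

(* Defs.v *)
From HB Require Import structures.
From mathcomp Require Import all_boot all_order all_algebra.
From mathcomp Require Import all_classical all_reals all_analysis.
Set Implicit Arguments.
Unset Strict Implicit.
Unset Printing Implicit Defensive.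

(* Main.v *)
Require Import Defs.
From mathcomp Require Import lra ring.
From HB Require Import structures.
From mathcomp Require Import all_boot all_order all_algebra.
From mathcomp Require Import all_classical all_reals all_analysis.
Import Order.TTheory GRing.Theory Num.Theory.
Import numFieldNormedType.Exports.
Local Open Scope ring_scope.
Local Open Scope classical_set_scope.

Theorem lemma3p1 (R : realType) (a b at_ : R ^nat) (C p eps : R)
  (ha : forall n, 0 <= a n) (hb : forall n, 0 <= b n) (hat : forall n, 0 <= at_ n)
  (hC : 0 < C) (hp : 0 < p) (heps0 : 0 <= eps) (hepsp : eps <= p)
  (hdiv : series a @ \oo --> +oo)
  (hconv : cvg (series (fun n => a n * b n `^ p) @ \oo))
  (hratio : (fun n => a n / at_ n) @ \oo --> (1 : R))
  (hstep : forall n, `|b n.+1 - b n| <= C * at_ n * b n `^ (p - eps)) :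
  b @ \oo --> (0 : R).
Proof.
set u := fun n => a n * b n `^ p.
set S := series u.
have u0 : forall n, 0 <= u n by move=> n; rewrite /u mulr_ge0 // powR_ge0.
have Sinc : nondecreasing_seq S.
  apply/nondecreasing_seqP => n; rewrite /S seriesSr lerDl; exact: u0.
set l := limn S.
have Sle : forall n, S n <= l by apply: nondecreasing_cvgn_le.
have [N0 _ HN0] : \forall n \near \oo, `|1 - a n / at_ n| < 2^-1.
  by move/cvgrPdist_lt: hratio; apply; rewrite invr_gt0.
have hat2 : forall n, (N0 <= n)%N -> at_ n <= 2 * a n.
  move=> n /HN0 /= H.
  have [z|nz] := eqVneq (at_ n) 0.
    by move: H; rewrite z invr0 mulr0 subr0 normr1 => H; exfalso; lra.
  have atp : 0 < at_ n by rewrite lt_def nz hat.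
  move: H; rewrite ltr_distl => /andP[H H'].
  have E : a n = a n / at_ n * at_ n by rewrite divfK.
  rewrite E; set r := a n / at_ n in H H' *; have := hat n; nra.
have Sl : S @ \oo --> l := hconv.
have tail : forall eta, 0 < eta -> exists N, forall n k, (N <= n)%N -> S k - S n <= eta.
  move=> eta eta0.
  have [N _ HN] : \forall n \near \oo, `|l - S n| < eta.
    by move/cvgrPdist_lt: Sl; apply.
  exists N => n k /HN /= H.
  move: H; rewrite ltr_distl => /andP[H1 H2].
  have := Sle k; lra.
have powb : forall d x, 0 < d -> d < x -> x `^ (p - eps) * d `^ eps <= x `^ p.
  move=> d x d0 dx.
  have x0 : 0 < x by apply: lt_trans dx.
  have -> : x `^ p = x `^ (p - eps) * x `^ eps.
    by rewrite -powRD ?subrK // (gt_eqF x0) implybT.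
  apply: ler_wpM2l; first exact: powR_ge0.
  by apply: ge0_ler_powR => //; rewrite ?nnegrE ltW.
have liminf : forall d, 0 < d -> forall n, exists k, (n <= k)%N /\ b k <= d.
  move=> d d0 n; apply/not_existsP => Hn.
  have Hb : forall k, (n <= k)%N -> d < b k.
    move=> k nk; have := Hn k; rewrite leNgt => H.
    by apply/negP => /negP Hk; apply: H; split.
  have dp : 0 < d `^ p by apply: powR_gt0.
  have bnd : forall m, series a (n + m)%N <= series a n + (S (n + m)%N - S n) / d `^ p.
    elim=> [|m IH]; first by rewrite addn0 subrr mul0r addr0.
    rewrite addnS !seriesSr.
    have : a (n + m)%N * d `^ p <= u (n + m)%N.
      rewrite /u; apply: ler_wpM2l => //; apply: ge0_ler_powR; rewrite ?nnegrE ?(ltW d0) //.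
      by apply: ltW. by apply: ltW; apply: Hb; rewrite leq_addr.
    rewrite -ler_pdivlMr // => H.
    have -> : S (n + m).+1 = S (n + m)%N + u (n + m)%N by rewrite /S seriesSr.
    move: IH; rewrite !mulrDl !mulNr; lra.
  have [M _ HM] : \forall m \near \oo, series a n + l / d `^ p + 1 <= series a m.
    by move/cvgryPge: hdiv; apply.
  have := HM (n + M)%N; rewrite /= leq_addl => /(_ isT).
  have := bnd M.
  have : (S (n + M) - S n) / d `^ p <= l / d `^ p.
    rewrite ler_pM2r ?invr_gt0 //.
    have := Sle (n + M)%N; have : 0 <= S n.
      rewrite /S /series /=; apply: sumr_ge0 => *; exact: u0.
    lra.
  lra.
have descent : forall d, 0 < d -> forall n, (N0 <= n)%N -> forall m,
    (forall j, (n <= j)%N -> (j < n + m)%N -> d < b j) ->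
    b n - b (n + m)%N <= (2 * C / d `^ eps) * (S (n + m)%N - S n).
  move=> d d0 n Nn; elim=> [|m IH] Hj; first by rewrite addn0 !subrr mulr0.
  have IH' : b n - b (n + m)%N <= 2 * C / d `^ eps * (S (n + m)%N - S n).
    by apply: IH => j jn jm; apply: Hj => //; rewrite addnS ltnS ltnW.
  have dj : d < b (n + m)%N by apply: Hj; rewrite ?leq_addr // addnS ltnS.
  have de : 0 < d `^ eps by apply: powR_gt0.
  have st : b (n + m)%N - b (n + m).+1 <= 2 * C / d `^ eps * u (n + m)%N.
    apply: le_trans (ler_norm _) _; rewrite distrC.
    apply: le_trans (hstep _) _.
    have hpe := powb _ _ d0 dj.
    have hat' := hat2 (n + m)%N (leq_trans Nn (leq_addr _ _)).
    rewrite /u.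
    set X := b (n + m)%N `^ (p - eps) in hpe *.
    set Y := b (n + m)%N `^ p in hpe *.
    set D := d `^ eps in hpe de *.
    have X0 : 0 <= X by apply: powR_ge0.
    have -> : 2 * C / D * (a (n + m)%N * Y) = (C * (2 * a (n + m)%N)) * (Y / D).
      by field; rewrite gt_eqF.
    have XY : X <= Y / D by rewrite ler_pdivlMr.
    apply: le_trans (_ : C * (2 * a (n + m)%N) * X <= _).
      by apply: ler_wpM2r => //; apply: ler_wpM2l => //; apply: ltW.
    apply: ler_wpM2l => //; apply: mulr_ge0 => //; [exact: ltW | by apply: mulr_ge0].
  rewrite addnS.
  have -> : S (n + m).+1 = S (n + m)%N + u (n + m)%N by rewrite /S seriesSr.
  move: IH' st; rewrite !mulrDr !mulrN; lra.
apply/cvgrPdist_le => e e0.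
set d := e / 2.
have d0 : 0 < d by rewrite /d divr_gt0.
set K := 2 * C / d `^ eps.
have K0 : 0 < K by rewrite /K divr_gt0 ?mulr_gt0 ?powR_gt0.
have [N HN] := tail (d / (2 * K)) (divr_gt0 d0 (mulr_gt0 (ltr0Sn _ _) K0)).
exists (maxn N0 N) => // n /= nN.
rewrite sub0r normrN ger0_norm //.
rewrite leNgt; apply/negP => bn.
have nN0 : (N0 <= n)%N by apply: leq_trans nN; rewrite leq_maxl.
have nN1 : (N <= n)%N by apply: leq_trans nN; rewrite leq_maxr.
have ex : exists k, (n <= k)%N && (b k <= d).
  by have [k [nk bk]] := liminf d d0 n; exists k; rewrite nk bk.
case: (ex_minnP ex) => k /andP[nk bk] kmin.
have Hj : forall j, (n <= j)%N -> (j < n + (k - n))%N -> d < b j.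
  move=> j nj; rewrite subnKC // => jk.
  rewrite ltNge; apply/negP => bj.
  by have := kmin j; rewrite nj bj => /(_ isT); rewrite leqNgt jk.
have := descent d d0 n nN0 (k - n)%N Hj.
rewrite subnKC //.
have := HN n k nN1.
have : K * (S k - S n) <= K * (d / (2 * K)) by rewrite ler_pM2l //; apply: HN.
have -> : K * (d / (2 * K)) = d / 2 by field; rewrite gt_eqF.
move=> h1 _ h2; have h3 : b n - b k <= d / 2 by apply: le_trans h2 h1.
have hd : e = 2 * d by rewrite /d; field.
clear -h3 bn bk hd d0; lra.
Qed.
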